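(* Under the standing assumptions, suppose $\varphi$ is lower semicontinuous on $X$. Let $\rho_k\to\infty$ and $\sigma_k\to 0$ with $\rho_k,\sigma_k>0$. Then for every sequence $\{x_k\}\subset X$ with $x_k\to\bar x$, $$\liminf_{k\to\infty}\varphi_{\rho_k,\sigma_k}(x_k)\ge\varphi(\bar x).$$
   Context: Standing assumptions: $X\subset\mathbb{R}^n$ and $Y\subset\mathbb{R}^m$ are nonempty, convex and compact. $f:X\times Y\to\mathbb{R}$ is continuously differentiable with Lipschitz continuous gradient on $X\times Y$, $f(x,\cdot)$ concave on $Y$. $c=(c_1,\dots,c_p)$ has continuously differentiable components with Lipschitz gradients, each $c_i(x,\cdot)$ convex on $Y$. For every $x\in X$, $\Theta(x):=\{y\in Y: c(x,y)\le 0\}\neq\emptyset$. Notation: $[z]_+=\max\{z,0\}$ componentwise; $\varphi(x):=\max\{f(x,y): y\in\Theta(x)\}$; $\psi_{\rho,\sigma}(x,y):=f(x,y)-\frac{\rho}{2}\|[c(x,y)]_+\|^2-\frac{\sigma}{2}\|y\|^2$; $\varphi_{\rho,\sigma}(x):=\max_{y\in Y}\psi_{\rho,\sigma}(x,y)$. *)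

(* Defs.v *)
From HB Require Import structures.
From mathcomp Require Import all_boot all_order all_algebra.
From mathcomp Require Import all_classical all_reals all_analysis.
Set Implicit Arguments. Unset Strict Implicit. Unset Printing Implicit Defensive.
Import Order.TTheory GRing.Theory Num.Theory.
Import numFieldNormedType.Exports.
Local Open Scope classical_set_scope.
Local Open Scope ring_scope.

Section Defs.
Variable R : realType.

Definition sqnorm (k : nat) (v : 'rV[R]_k) : R := \sum_(i < k) (v ord0 i) ^+ 2.

Definition sqnorm_pos (k : nat) (v : 'rV[R]_k) : R :=
  \sum_(i < k) (Num.max (v ord0 i) 0) ^+ 2.

Definition concave_on (k : nat) (S : set 'rV[R]_k) (g : 'rV[R]_k -> R) : Prop :=
  forall u v (t : R), S u -> S v -> 0 <= t <= 1 ->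
    t * g u + (1 - t) * g v <= g (t *: u + (1 - t) *: v).

Definition convex_on (k : nat) (S : set 'rV[R]_k) (g : 'rV[R]_k -> R) : Prop :=
  forall u v (t : R), S u -> S v -> 0 <= t <= 1 ->
    g (t *: u + (1 - t) *: v) <= t * g u + (1 - t) * g v.

Definition C11_on (V : normedModType R) (S : set V) (F : V -> R) : Prop :=
  (forall p, S p -> differentiable F p) /\
  exists L : R, forall p q, S p -> S q -> forall v : V,
    `|'d F p v - 'd F q v| <= L * `|p - q| * `|v|.

Variables (n m p : nat).
Variables (X : set 'rV[R]_n) (Y : set 'rV[R]_m).
Variable f : 'rV[R]_n -> 'rV[R]_m -> R.
Variable c : 'rV[R]_n -> 'rV[R]_m -> 'rV[R]_p.

Definition Theta (x : 'rV[R]_n) : set 'rV[R]_m :=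
  [set y | Y y /\ forall i : 'I_p, c x y ord0 i <= 0].

Definition phi (x : 'rV[R]_n) : R := sup [set f x y | y in Theta x].

Definition psi (rho sigma : R) (x : 'rV[R]_n) (y : 'rV[R]_m) : R :=
  f x y - rho / 2 * sqnorm_pos (c x y) - sigma / 2 * sqnorm y.

Definition phi_rs (rho sigma : R) (x : 'rV[R]_n) : R :=
  sup [set psi rho sigma x y | y in Y].

Definition lsc_on (g : 'rV[R]_n -> R) : Prop :=
  forall x, X x -> forall e : R, 0 < e -> exists2 d : R, 0 < d &
    forall z, X z -> `|z - x| < d -> g x - e < g z.

End Defs.

(* Main.v *)
Require Import Defs.
From HB Require Import structures.
From mathcomp Require Import all_boot all_order all_algebra.
From mathcomp Require Import all_classical all_reals all_analysis.
From mathcomp Require Import lra ring.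
Import Order.TTheory GRing.Theory Num.Theory.
Import numFieldNormedType.Exports.
Local Open Scope classical_set_scope.
Local Open Scope ring_scope.

Lemma entry_le_norm (R : realType) k (v : 'rV[R]_k) i : `|v ord0 i| <= `|v|.
Proof.
have /mapP[j Hj ->] : `|v ord0 i| \in [seq `|v x.1 x.2| | x : 'I_1 * 'I_k].
  by apply/mapP; exists (ord0, i) => //=; rewrite mem_enum.
by rewrite [leRHS]/Num.norm /= mx_normrE; apply/bigmax_geP; right => /=; exists j.
Qed.

Lemma sqnorm_ge0 (R : realType) k (v : 'rV[R]_k) : 0 <= sqnorm v.
Proof. by apply: sumr_ge0 => i _; rewrite sqr_ge0. Qed.

Lemma sqnorm_le (R : realType) k (v : 'rV[R]_k) B :
  `|v| <= B -> sqnorm v <= k%:R * B ^+ 2.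
Proof.
move=> vB; rewrite /sqnorm.
apply: (@le_trans _ _ (\sum_(i < k) B ^+ 2)); last by rewrite sumr_const card_ord mulr_natl.
apply: ler_sum => i _; rewrite -real_normK ?num_real //.
have h := le_trans (@entry_le_norm R k v i) vB.
by rewrite !expr2 ler_pM.
Qed.

Theorem lemma2p3 (R : realType) (n m p : nat)
  (X : set 'rV[R]_n) (Y : set 'rV[R]_m)
  (f : 'rV[R]_n -> 'rV[R]_m -> R) (c : 'rV[R]_n -> 'rV[R]_m -> 'rV[R]_p) :
  (* standing assumptions *)
  X !=set0 -> convex_set X -> compact X ->
  Y !=set0 -> convex_set Y -> compact Y ->
  C11_on (X `*` Y) (fun z : 'rV[R]_n * 'rV[R]_m => f z.1 z.2) ->
  (forall x, X x -> concave_on Y (f x)) ->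
  (forall i : 'I_p,
     C11_on (X `*` Y) (fun z : 'rV[R]_n * 'rV[R]_m => c z.1 z.2 ord0 i)) ->
  (forall i : 'I_p, forall x, X x -> convex_on Y (fun y => c x y ord0 i)) ->
  (forall x, X x -> Theta Y c x !=set0) ->
  (* phi lower semicontinuous on X *)
  lsc_on X (phi Y f c) ->
  forall (rho sigma : nat -> R),
    (forall k, 0 < rho k) -> (forall k, 0 < sigma k) ->
    rho @ \oo --> +oo -> sigma @ \oo --> 0 ->
  forall (x : nat -> 'rV[R]_n) (xbar : 'rV[R]_n),
    (forall k, X (x k)) -> x @ \oo --> xbar ->
    ((phi Y f c xbar)%:E <=
       limn_einf (fun k => (phi_rs Y f c (rho k) (sigma k) (x k))%:E))%E.
Proof.
move=> _ _ cX _ _ cY [fd _] _ _ _ Th lsc rho sigma rho0 sig0 _ sigcvg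
  x xbar Xx xcvg.
have Xxbar : X xbar.
  apply: (closed_cvg _ (compact_closed (@norm_hausdorff _ _) cX) _ _ xcvg).
  exact: nearW.
have [M fM] : exists M, forall a b, X a -> Y b -> f a b <= M.
  set F := fun z : 'rV[R]_n * 'rV[R]_m => f z.1 z.2.
  have cF : {within X `*` Y, continuous F}.
    apply: continuous_in_subspaceT => z /set_mem XYz.
    exact: differentiable_continuous (fd z XYz).
  have /compact_bounded [M0 [_ HM0]] := continuous_compact cF (compact_setX cX cY).
  exists (M0 + 1) => a b Xa Yb.
  have := HM0 (M0 + 1) ltac:(by rewrite ltrDl) (F (a, b)) (ex_intro2 _ _ (a, b) (conj Xa Yb) erefl).
  by move=> /= h; apply: le_trans h; exact: ler_norm.
have [C [C0 YC]] : exists C, 0 <= C /\ forall b, Y b -> sqnorm b <= C.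
  have [B0 [_ HB0]] := compact_bounded cY.
  exists (m%:R * (`|B0| + 1) ^+ 2); split; first by rewrite mulr_ge0 // sqr_ge0.
  move=> b Yb; apply: sqnorm_le.
  apply: HB0 => //; apply: (le_lt_trans (ler_norm _)); by rewrite ltrDl.
apply/lee_subgt0Pr => e e0.
have e30 : 0 < e / 3 by rewrite divr_gt0.
have [d d0 Hd] := lsc xbar Xxbar (e / 3) e30.
have /cvgrPdist_lt /(_ d d0) [N1 _ HN1] := xcvg.
have eC0 : 0 < e / 3 / (C + 1) by rewrite divr_gt0 // ltr_wpDl.
have /cvgrPdist_lt /(_ _ eC0) [N2 _ HN2] := sigcvg.
rewrite limn_einf_lim; apply: lime_ge; first exact: is_cvg_einfs.
exists (maxn N1 N2) => // N /= HN.
apply: le_ereal_inf_tmp => _ [k /= Nk <-].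
rewrite -EFinB lee_fin.
have k1 : (N1 <= k)%N by apply: leq_trans Nk; apply: leq_trans HN; exact: leq_maxl.
have k2 : (N2 <= k)%N by apply: leq_trans Nk; apply: leq_trans HN; exact: leq_maxr.
have hx := Hd _ (Xx k) ltac:(by rewrite distrC; exact: HN1).
have hs := HN2 _ k2; rewrite /= sub0r normrN gtr0_norm // in hs.
(* approximate maximizer of f over Theta *)
have hsupT : has_sup [set f (x k) y | y in Theta Y c (x k)].
  split; first by have [y Ty] := Th _ (Xx k); exists (f (x k) y), y.
  by exists M => _ [y [Yy _] <-]; exact: fM.
have [_ [y Ty <-] hy] := sup_adherent e30 hsupT.
have [Yy cy] := Ty.
have hsupY : has_sup [set psi f c (rho k) (sigma k) (x k) y | y in Y].
  split; first by exists (psi f c (rho k) (sigma k) (x k) y), y.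
  exists M => _ [z Yz <-]; rewrite /psi.
  apply: (le_trans _ (fM _ _ (Xx k) Yz)).
  rewrite -addrA gerDl -opprD oppr_le0 addr_ge0 // mulr_ge0 //.
  - by rewrite divr_ge0 // ltW.
  - by apply: sumr_ge0 => i _; rewrite sqr_ge0.
  - by rewrite divr_ge0 // ltW.
  - exact: sqnorm_ge0.
have hpsi : psi f c (rho k) (sigma k) (x k) y <= phi_rs Y f c (rho k) (sigma k) (x k).
  by apply: sup_upper_bound => //; exists y.
apply: le_trans hpsi.
have sp0 : sqnorm_pos (c (x k) y) = 0.
  by rewrite /sqnorm_pos big1 // => i _; rewrite max_r ?cy // expr0n.
rewrite /psi sp0 mulr0 subr0.
have hsC : sigma k / 2 * sqnorm y <= e / 3.
  have : sigma k * (C + 1) <= e / 3.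
    by rewrite -ler_pdivlMr ?ltr_wpDl // ltW.
  apply: le_trans; apply: ler_pM.
  - by rewrite divr_ge0 // ltW.
  - exact: sqnorm_ge0.
  - by rewrite ler_pdivrMr //; have := sig0 k; lra.
  - by have := YC _ Yy; lra.
rewrite /phi in hx.
have : phi Y f c xbar - e = (phi Y f c xbar - e / 3) - e / 3 - e / 3 by field.
rewrite /phi => ->.
apply: lerB; last exact: hsC.
by apply: ltW; apply: lt_trans hy; rewrite ltrD2r.
Qed.
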